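(* Let $R$ be a countable, cotorsion-free commutative ring. If $A$ and $B$ are torsion-free countable $R$-modules and $H=\mathrm{Hom}_R(A,B)$ is uncountable, then $H$ contains a submodule isomorphic to $R^\omega$ (the product of $\omega$ copies of $R$).
   Context: An $R$-module $B$ is torsion-free if $bs=0$ with $b\in B$ and $0\ne s\in R$ implies $b=0$. Cotorsion-free is with respect to a countable multiplicative subset $\mathbb{S}\subseteq R$ ($0\notin\mathbb{S}$, $1\in\mathbb{S}$): $R$ is $\mathbb{S}$-reduced ($\bigcap_{s\in\mathbb{S}}sR=0$), $\mathbb{S}$-torsion-free, and $\mathrm{Hom}_R(\widehat R,R)=0$ for the $\mathbb{S}$-adic completion $\widehat R$. *)

(* Defs.v *)
From HB Require Import structures.
From mathcomp Require Import all_boot all_order all_algebra.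
Set Implicit Arguments. Unset Strict Implicit. Unset Printing Implicit Defensive.
Import GRing.Theory.
Local Open Scope ring_scope.

Definition countable_type (T : Type) : Prop := exists f : nat -> T, forall t, exists n, f n = t.

Definition torsion_free (R : comNzRingType) (M : lmodType R) : Prop :=
  forall (s : R) (b : M), s != 0 -> s *: b = 0 -> b = 0.

Definition mult_subset (R : comNzRingType) (S : pred R) : Prop :=
  [/\ 1 \in S, 0 \notin S & forall s t, s \in S -> t \in S -> s * t \in S].

Definition in_ideal (R : comNzRingType) (s y : R) : Prop := exists v, y = s * v.

(* The S-adic completion R^ = lim_{s in S} R/sR (inverse limit over S ordered by
   divisibility).  An element is represented by a family x : R -> R of
   representatives x s of the class in R/sR (only values on S matter), compatible
   with the transition maps: if s | t then x t = x s mod sR. *)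
Definition completion_elt (R : comNzRingType) (S : pred R) (x : R -> R) : Prop :=
  forall s t, s \in S -> t \in S -> in_ideal s t -> in_ideal s (x t - x s).

Definition completion_eq (R : comNzRingType) (S : pred R) (x y : R -> R) : Prop :=
  forall s, s \in S -> in_ideal s (x s - y s).

Definition completion_hom (R : comNzRingType) (S : pred R) (phi : (R -> R) -> R) : Prop :=
  [/\ forall x y, completion_elt S x -> completion_elt S y ->
        completion_eq S x y -> phi x = phi y,
      forall x y, completion_elt S x -> completion_elt S y ->
        phi (fun s => x s + y s) = phi x + phi y
    & forall (r : R) x, completion_elt S x -> phi (fun s => r * x s) = r * phi x].

Definition hom_completion_zero (R : comNzRingType) (S : pred R) : Prop :=
  forall phi, completion_hom S phi -> forall x, completion_elt S x -> phi x = 0.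

Definition cotorsion_free (R : comNzRingType) (S : pred R) : Prop :=
  [/\ (forall r : R, (forall s, s \in S -> in_ideal s r) -> r = 0),
      (forall (r s : R), s \in S -> r * s = 0 -> r = 0)
    & hom_completion_zero S].

(* Main.v *)
Require Import Defs.
From HB Require Import structures.
From mathcomp Require Import all_boot all_order all_algebra.
From Stdlib Require Import ClassicalEpsilon ProofIrrelevance FunctionalExtensionality Classical.
Import GRing.Theory.
Local Open Scope ring_scope.

Section Aux.
Variables (R : comNzRingType) (A B : lmodType R).

Definition mklin {f : A -> B} (pf : linear f) : {linear A -> B} :=
  HB.pack f (GRing.isLinear.Build R A B *:%R f pf).

Lemma lin_ext (h1 h2 : {linear A -> B}) : (forall a, h1 a = h2 a) -> h1 = h2.
Proof.
move: h1 h2 => [f1 c1] [f2 c2] /= E.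
have ef := functional_extensionality _ _ E. subst f2.
case: c1 => a1 b1; case: c2 => a2 b2.
case: a1 => a1; case: a2 => a2; case: b1 => b1; case: b2 => b2.
by rewrite (proof_irrelevance _ a1 a2) (proof_irrelevance _ b1 b2).
Qed.

Lemma seq_pre (T : Type) (g : nat -> T) (gs : forall t, exists n, g n = t) (t : seq T) :
  exists ns, map g ns = t.
Proof.
elim: t => [|x t [ns E]]; first by exists [::].
have [n En] := gs x; by exists (n :: ns); rewrite /= En E.
Qed.

Lemma step1 (fA : nat -> A) (fAs : forall a, exists n, fA n = a) (gB : nat -> B)
  (gBs : forall b, exists n, gB n = b)
  (unc : ~ countable_type {linear A -> B}) (k : nat) :
  exists p : {linear A -> B} * nat,
    (forall j, (j < k)%N -> p.1 (fA j) = 0) /\ p.1 (fA p.2) != 0.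
Proof.
apply: NNPP => Hn; apply: unc.
have Z : forall h : {linear A -> B}, (forall j, (j < k)%N -> h (fA j) = 0) ->
    forall m, h (fA m) = 0.
  move=> h H0 m; apply/eqP; apply: contraT => Hm; exfalso; apply: Hn.
  by exists (h, m).
have lD : forall h1 h2 : {linear A -> B}, linear (fun a => h1 a - h2 a).
  by move=> h1 h2 r a b; rewrite (linearP h1) (linearP h2) scalerBr opprD addrACA.
have l0 : linear (fun _ : A => (0 : B)) by move=> r a b; rewrite scaler0 addr0.
pose h0 := mklin l0.
have Heq : forall h1 h2 : {linear A -> B},
    [seq h1 (fA j) | j <- iota 0 k] = [seq h2 (fA j) | j <- iota 0 k] -> h1 = h2.
  move=> h1 h2 E; apply: lin_ext => a.
  have [m <-] := fAs a.
  have : mklin (lD h1 h2) (fA m) = 0.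
    apply: Z => j jk /=.
    have := congr1 (fun s => nth 0 s j) E => /=.
    rewrite !(nth_map 0%N) ?size_iota // nth_iota // add0n => ->.
    by rewrite subrr.
  by move/eqP; rewrite /= subr_eq0 => /eqP.
pose P n := fun h : {linear A -> B} =>
  [seq h (fA j) | j <- iota 0 k] = map gB (CodeSeq.decode n).
exists (fun n => epsilon (inhabits h0) (P n)) => h.
have [ns Ens] := (@seq_pre _ gB gBs) [seq h (fA j) | j <- iota 0 k].
exists (CodeSeq.code ns).
have Ph : P (CodeSeq.code ns) h by rewrite /P CodeSeq.codeK Ens.
apply: Heq; rewrite (epsilon_spec (inhabits h0) (P (CodeSeq.code ns))) //.
by exists h.
Qed.
End Aux.

Section Build.
Variables (R : comNzRingType) (A B : lmodType R).
Variables (fA : nat -> A) (idx : A -> nat) (hk : nat -> {linear A -> B}) (mk : nat -> nat).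
Hypothesis idxK : forall a, fA (idx a) = a.
Hypothesis hk0 : forall k j, (j < k)%N -> hk k (fA j) = 0.
Hypothesis hknz : forall k, hk k (fA (mk k)) != 0.
Hypothesis TB : torsion_free B.

Fixpoint ks n := if n is n'.+1 then (mk (ks n')).+1 else 0%N.
Definition hs n := hk (ks n).
Definition ps n := mk (ks n).

Lemma ps_ge n : (ks n <= ps n)%N.
Proof.
rewrite leqNgt; apply/negP => H; have := hknz (ks n).
by rewrite hk0 ?eqxx.
Qed.

Lemma ks_ge n : (n <= ks n)%N.
Proof. elim: n => //= n IH; by rewrite ltnS; exact: leq_trans IH (ps_ge n). Qed.

Lemma ks_mono m n : (m < n)%N -> (ps m < ks n)%N.
Proof.
elim: n => // n IH; rewrite ltnS leq_eqVlt => /orP [/eqP -> // | /IH H] /=.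
by rewrite ltnS; apply: leq_trans (ltnW H) (ps_ge n).
Qed.

Definition ev (x : nat -> R) (N : nat) (a : A) : B := \sum_(n < N) x n *: hs n a.

Lemma ev_tail x a M N : (forall n, (M <= n)%N -> hs n a = 0) -> (M <= N)%N ->
  ev x N a = ev x M a.
Proof.
move=> H /subnKC <-; elim: (N - M)%N => [|d IH]; first by rewrite addn0.
by rewrite addnS /ev big_ord_recr /= H ?leq_addr // scaler0 addr0.
Qed.

Lemma vanish_idx a n : ((idx a).+1 <= n)%N -> hs n a = 0.
Proof.
move=> H; rewrite -[a]idxK /hs hk0 //; apply: leq_trans H (ks_ge n).
Qed.

Definition iof x a := ev x (idx a).+1 a.

Lemma iof_ev x a N : ((idx a).+1 <= N)%N -> iof x a = ev x N a.
Proof. by move=> H; rewrite /iof (@ev_tail x a _ N (@vanish_idx a) H). Qed.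

Lemma iof_lin x : linear (iof x).
Proof.
move=> r a b.
set N := maxn (idx (r *: a + b)).+1 (maxn (idx a).+1 (idx b).+1).
have H1 : ((idx (r *: a + b)).+1 <= N)%N by rewrite /N !leq_max leqnn.
have H2 : ((idx a).+1 <= N)%N by rewrite /N !leq_max leqnn !orbT.
have H3 : ((idx b).+1 <= N)%N by rewrite /N !leq_max leqnn !orbT.
rewrite (@iof_ev x _ _ H1) (@iof_ev x _ _ H2) (@iof_ev x _ _ H3).
rewrite /ev scaler_sumr -big_split /=; apply: eq_bigr => n _.
by rewrite linearP scalerDr !scalerA mulrC.
Qed.

Definition iot x : {linear A -> B} := @mklin R A B _ (iof_lin x).

Lemma iot_add r x y a : iot (fun n => r * x n + y n) a = r *: iot x a + iot y a.
Proof.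
rewrite /= /iof /ev scaler_sumr -big_split /=; apply: eq_bigr => n _.
by rewrite scalerDl scalerA.
Qed.

Lemma iot_inj x y : (forall a, iot x a = iot y a) -> x = y.
Proof.
move=> E; apply: functional_extensionality => m; elim/ltn_ind: m => m IH.
set a := fA (ps m).
have V : forall n, (m.+1 <= n)%N -> hs n a = 0.
  by move=> n H; rewrite /a /hs hk0 // ks_mono.
have K z : iot z a = ev z m.+1 a.
  rewrite /= (@iof_ev z a (maxn (idx a).+1 m.+1)) ?leq_maxl //.
  by rewrite (@ev_tail z a _ _ V) ?leq_maxr.
have := E a; rewrite !K /ev !big_ord_recr /=.
have -> : \sum_(i < m) x i *: hs i a = \sum_(i < m) y i *: hs i a.
  by apply: eq_bigr => i _; rewrite IH.
move/addrI => /eqP; rewrite -subr_eq0 -scalerBl => /eqP H.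
apply/eqP; rewrite -subr_eq0; apply/negP => /negP Hne.
by have := hknz (ks m); rewrite -/(hs m) -/(ps m) -/a (TB _ _ Hne H) eqxx.
Qed.
End Build.

Theorem lemma3p18 (R : comNzRingType) (S : pred R)
  (A B : lmodType R) :
  countable_type R ->
  mult_subset S -> cotorsion_free S ->
  torsion_free A -> countable_type A ->
  torsion_free B -> countable_type B ->
  ~ countable_type {linear A -> B} ->
  exists iota : (nat -> R) -> {linear A -> B},
    (forall (r : R) (x y : nat -> R) (a : A),
        iota (fun n => r * x n + y n) a = r *: iota x a + iota y a) /\
    (forall x y : nat -> R, (forall a, iota x a = iota y a) -> x = y).
Proof.
move=> _ _ _ _ [fA fAs] TB [gB gBs] unc.
have st := @step1 R A B fA fAs gB gBs unc.
pose sel k := proj1_sig (constructive_indefinite_description _ (st k)).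
have selP k := proj2_sig (constructive_indefinite_description _ (st k)).
pose idx a := proj1_sig (constructive_indefinite_description _ (fAs a)).
have idxK a : fA (idx a) = a := proj2_sig (constructive_indefinite_description _ (fAs a)).
have hk0 : forall k j, (j < k)%N -> (sel k).1 (fA j) = 0 by move=> k j; case: (selP k) => H _; apply: H.
have hknz : forall k, (sel k).1 (fA (sel k).2) != 0 by move=> k; case: (selP k).
exists (@iot R A B fA idx (fun k => (sel k).1) (fun k => (sel k).2) idxK hk0 hknz); split.
  by move=> r x y a; apply: iot_add.
exact: (@iot_inj R A B fA idx _ _ idxK hk0 hknz TB).
Qed.
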